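(* Assume $f$ has a unique global maximizer $g$ and the problem contains no weak epistasis. Then for every $v\in V$, the assignment $\{(\mathcal{IN}^*(v),g)\}=\{(u,g[u]):u\in\mathcal{IN}^*(v)\}$ is a stationary optimum.
   Context: Fix $\ell\ge1$, loci $V=\{0,\dots,\ell-1\}$, chromosomes $\vec y\in\{0,1\}^V$, fitness $f:\{0,1\}^V\to\mathbb R$ (maximized) with unique global maximizer $g$. An assignment $A$ is a set of pairs $(v,a)$ ($v\in V$, $a\in\{0,1\}$) with at most one pair per locus; $A[v]=a$ if $(v,a)\in A$, else $A[v]=*$; coverage $\mathcal C(A)=\{v:A[v]\ne*\}$; for $S\subseteq V$, $\{(S,g)\}=\{(s,g[s]):s\in S\}$. $\Psi_A$ (constrained optima) is the set of chromosomes agreeing with $A$ on $\mathcal C(A)$ with maximum fitness among such chromosomes; $\Psi_A[v]=\{\psi_v:\psi\in\Psi_A\}$. For full assignments $B$, $f(B)$ is the fitness of the corresponding chromosome. Epistasis: for $v\in V$ and nonempty $S\subseteq V\setminus\{v\}$, $S\Rightarrow v$ iff for every $s\in S$ there exists an assignment $A$ with $\mathcal C(A)=S$ and $\Psi_A[v]\neq\Psi_{A\setminus\{(s,A[s])\}}[v]$; the empty set is never epistatic. An epistasis $S\Rightarrow v$ with $|S|\ge2$ is weak if no nonempty proper subset $T\subsetneq S$ has $T\Rightarrow v$; ''no weak epistasis'' means no epistasis is weak. The epistatic graph (EG) is the directed graph on $V$ with an edge $u\to v$ iff $\{u\}\Rightarrow v$. $\mathcal{IN}^0(v)=\{v\}$,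 $\mathcal{IN}^i(v)=\{u:\exists w\in\mathcal{IN}^{i-1}(v),\ \{u\}\Rightarrow w\}$ for $i\ge1$, and $\mathcal{IN}^*(v)=\bigcup_{i=0}^{\ell-1}\mathcal{IN}^i(v)$ (the in-closure of $v$: $v$ together with all vertices having a directed path to $v$ in the EG). A stationary optimum is a nonempty assignment $A$ such that for every assignment $A'\neq A$ with $\mathcal C(A')=\mathcal C(A)$ and every assignment $R$ with $\mathcal C(R)=V\setminus\mathcal C(A)$, $f(A\cup R)>f(A'\cup R)$. *)

(* Defs.v *)
(* Loci V = 'I_l, chromosomes = {ffun 'I_l -> bool},
   fitness values in an arbitrary real domain R (only the order is used). *)
From mathcomp Require Import all_boot all_order all_algebra.
Set Implicit Arguments. Unset Strict Implicit. Unset Printing Implicit Defensive.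
Import Order.TTheory GRing.Theory Num.Theory.
Local Open Scope ring_scope.

Section Epistasis.
Variable l : nat.
Variable R : realDomainType.

Definition chrom := {ffun 'I_l -> bool}.
(* An assignment: A v = Some a iff (v,a) \in A ; None means A[v] = * *)
Definition assignment := {ffun 'I_l -> option bool}.

Variable f : chrom -> R.

Definition coverage (A : assignment) : {set 'I_l} := [set v | A v != None].

Definition agrees (A : assignment) (x : chrom) : bool :=
  [forall v, if A v is Some a then x v == a else true].

Definition Psi (A : assignment) : {set chrom} :=
  [set x | agrees A x && [forall y, agrees A y ==> (f y <= f x)]].

Definition PsiAt (A : assignment) (v : 'I_l) : {set bool} :=
  [set (x : chrom) v | x in Psi A].

Definition remove (A : assignment) (s : 'I_l) : assignment :=
  [ffun u => if u == s then None else A u].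

Definition epistatic (S : {set 'I_l}) (v : 'I_l) : bool :=
  [&& S != set0, v \notin S &
   [forall s in S, exists A : assignment,
      (coverage A == S) && (PsiAt A v != PsiAt (remove A s) v)]].

Definition weak_epistasis (S : {set 'I_l}) (v : 'I_l) : bool :=
  [&& 2 <= #|S|, epistatic S v &
   ~~ [exists T : {set 'I_l}, [&& T != set0, T \proper S & epistatic T v]]]%N.

Definition no_weak_epistasis : Prop :=
  forall (S : {set 'I_l}) (v : 'I_l), ~~ weak_epistasis S v.

Fixpoint IN (i : nat) (v : 'I_l) : {set 'I_l} :=
  match i with
  | 0 => [set v]
  | i'.+1 => [set u | [exists w in IN i' v, epistatic [set u] w]]
  end.

Definition INstar (v : 'I_l) : {set 'I_l} :=
  \bigcup_(i < l) IN i v.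

Definition assign_of (S : {set 'I_l}) (g : chrom) : assignment :=
  [ffun u => if u \in S then Some (g u) else None].

(* the chromosome of the full assignment A ∪ R (A and R with disjoint
   coverages whose union is V; the default value is never used then) *)
Definition union_chrom (A Rr : assignment) : chrom :=
  [ffun u => match A u with
             | Some a => a
             | None => if Rr u is Some b then b else false
             end].

Definition stationary_optimum (A : assignment) : Prop :=
  coverage A != set0 /\
  forall A' Rr : assignment,
    A' != A -> coverage A' = coverage A ->
    coverage Rr = ~: coverage A ->
    f (union_chrom A' Rr) < f (union_chrom A Rr).

Definition unique_global_max (g : chrom) : Prop :=
  forall x : chrom, x != g -> f x < f g.

End Epistasis.

(* Main.v *)
Require Import Defs.
From mathcomp Require Import all_boot all_order all_algebra.
Set Implicit Arguments. Unset Strict Implicit. Unset Printing Implicit Defensive.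
Import Order.TTheory GRing.Theory Num.Theory.
Local Open Scope ring_scope.

Definition emptyA (l : nat) : assignment l := [ffun _ => None].

Lemma psi_indep (l : nat) (R : realDomainType) (f : chrom l -> R) (w : 'I_l) :
  forall n (T : {set 'I_l}), (#|T| <= n)%N -> w \notin T ->
  (forall T' : {set 'I_l}, T' \subset T -> ~~ epistatic f T' w) ->
  forall B, coverage B = T -> PsiAt f B w = PsiAt f (emptyA l) w.
Proof.
elim=> [|n IH] T hn wT hep B hB.
  have T0 : T = set0 by apply/eqP; rewrite -cards_eq0 -leqn0.
  have -> : B = emptyA l; last by [].
  apply/ffunP=> u; rewrite ffunE; apply/eqP; apply: contraT => hu.
  have : u \in coverage B by rewrite inE.
  by rewrite hB T0 inE.
have [T0|Tn0] := eqVneq T set0.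
  have -> : B = emptyA l; last by [].
  apply/ffunP=> u; rewrite ffunE; apply/eqP; apply: contraT => hu.
  have : u \in coverage B by rewrite inE.
  by rewrite hB T0 inE.
have := hep T (subxx T); rewrite /epistatic Tn0 wT /=.
move/forall_inPn=> [s sT /existsPn /(_ B)].
rewrite hB eqxx /= negbK => /eqP ->.
apply: (IH (T :\ s)).
- by rewrite -ltnS (leq_trans _ hn) // (cardsD1 s T) sT.
- by rewrite inE negb_and wT orbT.
- by move=> T' sub; apply: hep; apply: subset_trans sub (subsetDl _ _).
- apply/setP=> u; rewrite !inE -hB !inE ffunE; by case: (u == s).
Qed.

Lemma epi_single (l : nat) (R : realDomainType) (f : chrom l -> R) (w : 'I_l) :
  no_weak_epistasis f ->
  forall n (T : {set 'I_l}), (#|T| <= n)%N -> epistatic f T w ->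
  exists2 u, u \in T & epistatic f [set u] w.
Proof.
move=> nw; elim=> [|n IH] T hn he.
  move: he; rewrite /epistatic => /and3P[T0 _ _].
  by move: T0; rewrite -card_gt0; case: #|T| hn.
have [le1|gt1] := leqP #|T| 1.
  have T0 : T != set0 by case/and3P: he.
  have /cards1P[u Tu] : #|T| == 1%N.
    by move: T0; rewrite -card_gt0; case: #|T| le1 => [|[|]].
  by exists u; [rewrite Tu inE | rewrite -Tu].
have := nw T w; rewrite /weak_epistasis gt1 he /= negbK.
case/existsP=> T' /and3P[T'0 pT' eT'].
have [u uT' eu] := IH T' (leq_trans (proper_card pT') hn) eT'.
exists u => //; exact: (subsetP (proper_sub pT')).
Qed.

Definition Fstep (l : nat) (R : realDomainType) (f : chrom l -> R) (v : 'I_l)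
  (X : {set 'I_l}) : {set 'I_l} :=
  [set v] :|: [set u | [exists w in X, epistatic f [set u] w]].

Lemma Fstep_mono (l : nat) (R : realDomainType) (f : chrom l -> R) (v : 'I_l) :
  {homo Fstep f v : X Y / X \subset Y}.
Proof.
move=> X Y sXY; apply/subsetP=> u; rewrite !inE => /orP[->//|/existsP[w /andP[wX e]]].
by apply/orP; right; apply/existsP; exists w; rewrite (subsetP sXY).
Qed.

Lemma iter_IN (l : nat) (R : realDomainType) (f : chrom l -> R) (v : 'I_l) :
  forall k u, u \in iter k (Fstep f v) set0 -> exists2 i, (i < k)%N & u \in IN f i v.
Proof.
elim=> [|k IH] u /=; first by rewrite inE.
rewrite !inE => /orP[/eqP->|/existsP[w /andP[/IH[i ik wi] e]]].
  by exists 0%N => //; rewrite inE.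
by exists i.+1 => //=; rewrite inE; apply/existsP; exists w; rewrite wi.
Qed.

Lemma INstar_closed (l : nat) (R : realDomainType) (f : chrom l -> R) (v : 'I_l) :
  forall u w, w \in INstar f v -> epistatic f [set u] w -> u \in INstar f v.
Proof.
have fixK := fixsetK (Fstep_mono f v).
have INfix : forall i, IN f i v \subset fixset (Fstep f v).
  elim=> [|i IH] /=; rewrite -fixK /Fstep; apply/subsetP=> u; rewrite !inE.
    by move=> ->.
  case/existsP=> w /andP[wi e]; apply/orP; right; apply/existsP; exists w.
  by rewrite e (subsetP IH).
have fixIN : forall u, u \in fixset (Fstep f v) -> u \in INstar f v.
  move=> u; rewrite /fixset card_ord => /iter_IN[i il ui].
  by apply/bigcupP; exists (Ordinal il).
move=> u w /bigcupP[i _ wi] e; apply: fixIN.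
rewrite -fixK /Fstep !inE; apply/orP; right; apply/existsP; exists w.
by rewrite e (subsetP (INfix i)).
Qed.

Lemma Psi_empty (l : nat) (R : realDomainType) (f : chrom l -> R) (g : chrom l) :
  unique_global_max f g -> forall w, PsiAt f (emptyA l) w = [set g w].
Proof.
move=> ug w.
have PE : Psi f (emptyA l) = [set g].
  apply/setP=> x; rewrite !inE.
  have ag : forall y, agrees (emptyA l) y by move=> y; apply/forallP=> u; rewrite ffunE.
  rewrite ag /=; have [->|xg] := eqVneq x g.
    apply/forallP=> y; rewrite ag /=; have [->//|yg] := eqVneq y g.
    by apply/ltW/ug.
  apply/negbTE/forallPn; exists g; rewrite ag /= -ltNge; exact: ug.
by rewrite /PsiAt PE imset_set1.
Qed.

Theorem lemma1 (l : nat) (R : realDomainType) (f : chrom l -> R) (g : chrom l) :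
  (0 < l)%N ->
  unique_global_max f g ->
  no_weak_epistasis f ->
  forall v : 'I_l, stationary_optimum f (assign_of (INstar f v) g).
Proof.
move=> l0 ug nw v.
set S := INstar f v; set A := assign_of S g.
have covA : coverage A = S.
  by apply/setP=> u; rewrite !inE ffunE; case: (u \in S).
split.
  rewrite covA; apply/set0Pn; exists v; apply/bigcupP; exists (Ordinal l0) => //.
  by rewrite inE.
move=> A' Rr neA covA' covR.
have PR : forall w, w \in S -> PsiAt f Rr w = [set g w].
  move=> w wS; rewrite -(Psi_empty ug).
  apply: (@psi_indep _ _ f w #|~: S| (~: S)) => //.
  - by rewrite inE wS.
  - move=> T' sT'; apply/negP=> e.
    have [u uT' eu] := epi_single nw (leqnn _) e.
    have uS : u \in S by exact: (@INstar_closed _ _ f v u w wS eu).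
    by move: (subsetP sT' u uT'); rewrite inE uS.
  - by rewrite covR covA.
set x0 := union_chrom A Rr.
have key : forall y, y \in Psi f Rr -> y = x0.
  move=> y yP; have := yP; rewrite inE => /andP[agy _].
  apply/ffunP=> u; rewrite /x0 /union_chrom ffunE /A ffunE.
  case uS: (u \in S).
    have : y u \in PsiAt f Rr u by rewrite /PsiAt; apply/imsetP; exists y.
    have -> := PR u (idP uS).
    by rewrite inE => /eqP.
  have : u \in coverage Rr by rewrite covR covA inE uS.
  rewrite inE; case eR: (Rr u) => [b|] // _.
  by move/forallP: agy => /(_ u); rewrite eR => /eqP.
have agx0 : agrees Rr x0.
  apply/forallP=> u; case eR: (Rr u) => [b|] //.
  have : u \in coverage Rr by rewrite inE eR.
  rewrite covR covA inE.
  rewrite /x0 /union_chrom ffunE /A ffunE => /negbTE->; by rewrite eR.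
set x := union_chrom A' Rr.
have agx : agrees Rr x.
  apply/forallP=> u; case eR: (Rr u) => [b|] //.
  have : u \in coverage Rr by rewrite inE eR.
  rewrite covR -covA' inE.
  rewrite inE negbK /x /union_chrom ffunE => /eqP->; by rewrite eR.
have x0max : forall y, agrees Rr y -> f y <= f x0.
  case: (@arg_maxP _ _ _ x0 (agrees Rr) f agx0) => m agm mmax.
  have mP : m \in Psi f Rr.
    by rewrite inE agm /=; apply/forallP=> y; apply/implyP; exact: mmax.
  by rewrite -(key m mP).
rewrite ltNge; apply/negP=> le0.
have xP : x \in Psi f Rr.
  rewrite inE agx /=; apply/forallP=> y; apply/implyP=> agy.
  exact: le_trans (x0max y agy) le0.
have xx0 := key x xP.
move/negP: neA; apply; apply/eqP/ffunP=> u.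
have := congr1 (fun z : chrom l => z u) xx0.
rewrite /x /x0 /union_chrom /A !ffunE /=.
case uS: (u \in S).
  have : u \in coverage A' by rewrite covA' covA.
  by rewrite inE; case: (A' u) => [a|] // _ ->.
have : u \notin coverage A' by rewrite covA' covA uS.
by rewrite inE negbK => /eqP->.
Qed.
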